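(* Let $(L_i)_{i\in I}$ be a family of lattices with zero, pairwise intersecting in $\{0\}$, let $L=\coprod^0_{i\in I}L_i$ with each $L_i$ identified with its canonical copy in $L$, adjoin a new top element $\infty$ to $L$ and put $\overline{L}_i=L_i\cup\{\infty\}$. Let $\alpha_i\colon L\to L_i$, $x\mapsto x_{(i)}$ (the largest element of $L_i$ below $x$), and $\beta_i\colon L\to\overline{L}_i$, $x\mapsto x^{(i)}$ (the least element of $\overline{L}_i$ above $x$ in $L\cup\{\infty\}$); these exist for all $x$. Then, for each $i\in I$, the canonical embedding $L_i\hookrightarrow L$ is both lower bounded and upper bounded; in particular it is a nonempty-complete lattice homomorphism. Furthermore, $\alpha_i$ is meet-complete and $\beta_i$ is nonempty-join-complete.
   Context: $\coprod^0$ denotes the coproduct in the category of lattices with zero and zero-preserving homomorphisms. A map $f\colon K\to M$ between lattices (not necessarily complete) is meet-complete if for all $a\in K$ and $X\subseteq K$, $a=\bigwedge X$ in $K$ implies $f(a)=\bigwedge f[X]$ in $M$; nonempty-meet-complete if this is required only for nonempty $X$; join-completeness and nonempty-join-completeness are defined dually; $f$ is nonempty-complete if it is both nonempty-meet-complete and nonempty-join-complete. A homomorphism $f\colon K\to M$ is lower bounded if for each $y\in M$ the set $\{x\in K: y\le f(x)\}$ is empty or has a least element; upper bounded is defined dually. *)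

(* Defs.v *)
From HB Require Import structures.
From mathcomp Require Import all_boot all_order.
Set Implicit Arguments. Unset Strict Implicit. Unset Printing Implicit Defensive.
Import Order.TTheory.
Local Open Scope order_scope.

(* Lattices with zero are MathComp's [bLatticeType]s; zero = \bot. *)

Definition zlat_hom (d1 d2 : Order.disp_t) (A : bLatticeType d1) (B : bLatticeType d2)
  (f : A -> B) : Prop :=
  [/\ f \bot = \bot,
      (forall x y, f (x `&` y) = f x `&` f y) &
      (forall x y, f (x `|` y) = f x `|` f y)].

(** [L] together with the maps [e i : Li i -> L] is a coproduct of the family
    [Li] in the category of lattices with zero and zero-preserving homomorphisms
    (universal property). *)
Definition is_zcoproduct (I : Type) (dL : I -> Order.disp_t)
  (Li : forall i, bLatticeType (dL i)) (d : Order.disp_t) (L : bLatticeType d)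
  (e : forall i, Li i -> L) : Prop :=
  (forall i, zlat_hom (e i)) /\
  forall (dM : Order.disp_t) (M : bLatticeType dM) (f : forall i, Li i -> M),
    (forall i, zlat_hom (f i)) ->
    exists g : L -> M,
      [/\ zlat_hom g, (forall i x, g (e i x) = f i x) &
          (forall g' : L -> M, zlat_hom g' -> (forall i x, g' (e i x) = f i x) ->
             forall y, g' y = g y)].

Definition is_lub (T : Type) (le : T -> T -> bool) (X : T -> Prop) (a : T) : Prop :=
  (forall x, X x -> le x a) /\ (forall b, (forall x, X x -> le x b) -> le a b).
Definition is_glb (T : Type) (le : T -> T -> bool) (X : T -> Prop) (a : T) : Prop :=
  is_lub (fun x y => le y x) X a.

Definition fimage (A B : Type) (f : A -> B) (X : A -> Prop) : B -> Prop :=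
  fun y => exists2 x, X x & y = f x.

Definition meet_complete (A B : Type) (leA : A -> A -> bool) (leB : B -> B -> bool)
  (f : A -> B) : Prop :=
  forall (X : A -> Prop) a, is_glb leA X a -> is_glb leB (fimage f X) (f a).
Definition nonempty_meet_complete (A B : Type) (leA : A -> A -> bool) (leB : B -> B -> bool)
  (f : A -> B) : Prop :=
  forall (X : A -> Prop) a, (exists x, X x) -> is_glb leA X a -> is_glb leB (fimage f X) (f a).
Definition join_complete (A B : Type) (leA : A -> A -> bool) (leB : B -> B -> bool)
  (f : A -> B) : Prop :=
  forall (X : A -> Prop) a, is_lub leA X a -> is_lub leB (fimage f X) (f a).
Definition nonempty_join_complete (A B : Type) (leA : A -> A -> bool) (leB : B -> B -> bool)
  (f : A -> B) : Prop :=
  forall (X : A -> Prop) a, (exists x, X x) -> is_lub leA X a -> is_lub leB (fimage f X) (f a).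
Definition nonempty_complete (A B : Type) (leA : A -> A -> bool) (leB : B -> B -> bool)
  (f : A -> B) : Prop :=
  nonempty_meet_complete leA leB f /\ nonempty_join_complete leA leB f.

Definition lower_bounded (d1 d2 : Order.disp_t) (K : bLatticeType d1) (M : bLatticeType d2)
  (f : K -> M) : Prop :=
  forall y : M, (forall x, ~~ (y <= f x)) \/
                exists x0, y <= f x0 /\ forall x, y <= f x -> x0 <= x.
Definition upper_bounded (d1 d2 : Order.disp_t) (K : bLatticeType d1) (M : bLatticeType d2)
  (f : K -> M) : Prop :=
  forall y : M, (forall x, ~~ (f x <= y)) \/
                exists x0, f x0 <= y /\ forall x, f x <= y -> x <= x0.

(** Adjoining a new top element: [None] plays the role of infinity. *)
Definition le_inf (d : Order.disp_t) (T : porderType d) (a b : option T) : bool :=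
  match b, a with
  | None, _ => true
  | Some _, None => false
  | Some b', Some a' => a' <= b'
  end.
Definition omap_inf (A B : Type) (f : A -> B) (a : option A) : option B :=
  match a with None => None | Some x => Some (f x) end.

Definition is_alpha (d1 d2 : Order.disp_t) (Li : bLatticeType d1) (L : bLatticeType d2)
  (e : Li -> L) (alpha : L -> Li) : Prop :=
  forall x : L, e (alpha x) <= x /\ forall a : Li, e a <= x -> a <= alpha x.

Definition is_beta (d1 d2 : Order.disp_t) (Li : bLatticeType d1) (L : bLatticeType d2)
  (e : Li -> L) (beta : L -> option Li) : Prop :=
  forall x : L, le_inf (Some x) (omap_inf e (beta x)) /\
    forall b : option Li, le_inf (Some x) (omap_inf e b) -> le_inf (beta x) b.

(* Main.v *)
Require Import Defs.
From HB Require Import structures.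
From mathcomp Require Import all_boot all_order.
From mathcomp Require Import boolp.
Import Order.TTheory.
Local Open Scope order_scope.

Set Implicit Arguments. Unset Strict Implicit.

Record lat_ax (T : Type) (le : T -> T -> Prop) (mt jn : T -> T -> T) (b : T) : Prop := {
  la_refl : forall x, le x x;
  la_anti : forall x y, le x y -> le y x -> x = y;
  la_trans : forall x y z, le x y -> le y z -> le x z;
  la_meet : forall x y z, le x (mt y z) <-> (le x y /\ le x z);
  la_join : forall x y z, le (jn x y) z <-> (le x z /\ le y z);
  la_bot : forall x, le b x }.

Definition clat (T : Type) (le : T -> T -> Prop) (mt jn : T -> T -> T) (b : T)
  (H : lat_ax le mt jn b) : Type := T.
Arguments clat {T le mt jn b} H.

Section CL.
Variables (T : Type) (le : T -> T -> Prop) (mt jn : T -> T -> T) (b : T) (H : lat_ax le mt jn b).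
Definition cle (x y : clat H) : bool := `[< le x y >].
Lemma cle_refl : reflexive cle.
Proof. by move=> x; rewrite /cle; apply/asboolP; exact: (la_refl H). Qed.
Lemma cle_anti : antisymmetric cle.
Proof. by move=> x y; rewrite /cle => /andP[/asboolP h1 /asboolP h2]; exact: (la_anti H). Qed.
Lemma cle_trans : transitive cle.
Proof. by move=> y x z; rewrite /cle => /asboolP h1 /asboolP h2; apply/asboolP; exact: (la_trans H h1 h2). Qed.
Lemma cmeetP (x y z : clat H) : cle x (mt y z) = cle x y && cle x z.
Proof.
rewrite /cle; apply/asboolP/andP => [/(la_meet H)[h1 h2]|[/asboolP h1 /asboolP h2]].
  by split; apply/asboolP.
by apply/(la_meet H).
Qed.
Lemma cjoinP (x y z : clat H) : cle (jn x y) z = cle x z && cle y z.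
Proof.
rewrite /cle; apply/asboolP/andP => [/(la_join H)[h1 h2]|[/asboolP h1 /asboolP h2]].
  by split; apply/asboolP.
by apply/(la_join H).
Qed.
Lemma cbot (x : clat H) : cle b x.
Proof. by rewrite /cle; apply/asboolP; exact: (la_bot H). Qed.
End CL.

HB.instance Definition _ T le mt jn b H := gen_eqMixin (@clat T le mt jn b H).
HB.instance Definition _ T le mt jn b H := gen_choiceMixin (@clat T le mt jn b H).
HB.instance Definition _ T le mt jn b H :=
  Order.Le_isPOrder.Build (Order.Disp tt tt) (@clat T le mt jn b H) (@cle_refl T le mt jn b H)
   (@cle_anti T le mt jn b H) (@cle_trans T le mt jn b H).
HB.instance Definition _ T le mt jn b H :=
  Order.POrder_MeetJoin_isLattice.Build (Order.Disp tt tt) (@clat T le mt jn b H)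
   (@cmeetP T le mt jn b H) (@cjoinP T le mt jn b H).
HB.instance Definition _ T le mt jn b H :=
  Order.hasBottom.Build (Order.Disp tt tt) (@clat T le mt jn b H) (@cbot T le mt jn b H).

Section CL2.
Variables (T : Type) (le : T -> T -> Prop) (mt jn : T -> T -> T) (b : T) (H : lat_ax le mt jn b).
Check (clat H : bLatticeType _).
Lemma cmeetE (x y : clat H) : x `&` y = mt x y. Proof. by []. Qed.
Lemma cjoinE (x y : clat H) : x `|` y = jn x y. Proof. by []. Qed.
Lemma cbotE : (\bot : clat H) = b. Proof. by []. Qed.
Lemma cleE (x y : clat H) : (x <= y) = `[< le x y >]. Proof. by []. Qed.
End CL2.

Unset Implicit Arguments. Unset Strict Implicit.



Lemma sig_val_inj (T : Type) (P : T -> Prop) (a b : {x : T | P x}) :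
  proj1_sig a = proj1_sig b -> a = b.
Proof. case: a b => [x px] [y py] /= exy; subst y; congr exist; exact: Prop_irrelevance. Qed.

Lemma hom_le (d1 d2 : Order.disp_t) (A : bLatticeType d1) (B : bLatticeType d2) (f : A -> B) :
  zlat_hom f -> forall x y, x <= y -> f x <= f y.
Proof. by case=> _ hm _ x y /meet_idPl hxy; apply/meet_idPl; rewrite -hm hxy. Qed.

Section Closure.
Variables (I : Type) (dL : I -> Order.disp_t) (Li : forall i, bLatticeType (dL i))
  (d : Order.disp_t) (L : bLatticeType d) (e : forall i, Li i -> L).
Hypothesis Hco : is_zcoproduct e.

Lemma coprod_unique (dM : Order.disp_t) (M : bLatticeType dM) (f : forall i, Li i -> M)
  (h1 h2 : L -> M) : (forall i, zlat_hom (f i)) ->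
  zlat_hom h1 -> (forall i x, h1 (e i x) = f i x) ->
  zlat_hom h2 -> (forall i x, h2 (e i x) = f i x) -> forall y, h1 y = h2 y.
Proof.
move=> hf hh1 e1 hh2 e2 y; have [g [_ _ u]] := (proj2 Hco) _ _ f hf.
by rewrite (u _ hh1 e1) (u _ hh2 e2).
Qed.

Variable P : L -> Prop.
Hypotheses (P0 : P \bot) (PI : forall x y, P x -> P y -> P (x `&` y))
  (PU : forall x y, P x -> P y -> P (x `|` y)) (Pe : forall j b, P (e j b)).

Let S := {x : L | P x}.
Let sle (a b : S) : Prop := proj1_sig a <= proj1_sig b.
Let smt (a b : S) : S := exist P (proj1_sig a `&` proj1_sig b) (PI _ _ (proj2_sig a) (proj2_sig b)).
Let sjn (a b : S) : S := exist P (proj1_sig a `|` proj1_sig b) (PU _ _ (proj2_sig a) (proj2_sig b)).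
Let sb : S := exist P \bot P0.

Lemma sub_ax : lat_ax sle smt sjn sb.
Proof.
split; rewrite /sle /=.
- by move=> x.
- by move=> x y h1 h2; apply: sig_val_inj; apply/le_anti; rewrite h1 h2.
- by move=> x y z; apply: le_trans.
- by move=> x y z; rewrite lexI; split => [/andP|[-> ->]].
- by move=> x y z; rewrite leUx; split => [/andP|[-> ->]].
- by move=> x; apply: le0x.
Qed.

Lemma gen_closure x : P x.
Proof.
pose M := clat sub_ax.
pose f j (b : Li j) : M := exist P (e j b) (Pe j b).
have hej j : zlat_hom (e j) by apply: (proj1 Hco).
have hf j : zlat_hom (f j).
  have [h0 hm hj] := hej j.
  by split => [|a c|a c]; apply: sig_val_inj; rewrite /= ?h0 ?hm ?hj.
have [g [hg ge _]] := (proj2 Hco) _ M f hf.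
pose h (y : L) : L := proj1_sig (g y : S).
have hh : zlat_hom h.
  case: hg => g0 gm gj; split => [|a c|a c]; rewrite /h.
  - by rewrite g0.
  - by rewrite gm.
  - by rewrite gj.
have hid : zlat_hom (fun y : L => y) by [].
have heh : forall j b, h (e j b) = e j b by move=> j b; rewrite /h ge.
have H := @coprod_unique _ L e h (fun y => y) hej hh heh hid (fun j b => erefl).
rewrite -(H x) /h; exact: (proj2_sig (g x)).
Qed.
End Closure.


Section Retr.
Variables (I : Type) (dL : I -> Order.disp_t) (Li : forall i, bLatticeType (dL i))
  (d : Order.disp_t) (L : bLatticeType d) (e : forall i, Li i -> L).
Hypothesis Hco : is_zcoproduct e.
Variable i : I.

Definition rf (j : I) (b : Li j) : Li i :=
  match pselect (j = i) with
  | left h => eq_rect j (fun k => Li k : Type) b i h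
  | right _ => \bot end.

Lemma rf_hom j : zlat_hom (rf j).
Proof.
rewrite /zlat_hom /rf; case: (pselect (j = i)) => [h|h].
  by subst.
by split => // *; rewrite ?meetxx ?joinxx.
Qed.

Lemma rf_ii b : rf i b = b.
Proof. by rewrite /rf; case: pselect => [h|//]; rewrite (Prop_irrelevance h erefl). Qed.

Lemma ex_alpha : exists r : L -> Li i,
  [/\ zlat_hom r, forall b, r (e i b) = b & forall x, e i (r x) <= x].
Proof.
have [r [hr re _]] := (proj2 Hco) _ _ rf rf_hom.
have hei : zlat_hom (e i) by apply: (proj1 Hco).
exists r; split => //; first by move=> b; rewrite re rf_ii.
apply: (@gen_closure _ _ _ _ _ e Hco (fun x => e i (r x) <= x)).
- by case: hr => -> _ _; case: hei => -> _ _.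
- move=> x y hx hy; case: hr => _ -> _; case: hei => _ -> _.
  by apply: leI2.
- move=> x y hx hy; case: hr => _ _ ->; case: hei => _ _ ->.
  by apply: leU2.
- move=> j b; rewrite re /rf; case: (pselect (j = i)) => [h|h].
    by subst.
  by case: hei => -> _ _; apply: le0x.
Qed.
End Retr.


Section OptOps.
Set Implicit Arguments. Unset Strict Implicit.
Variables (dk : Order.disp_t) (K : bLatticeType dk).
Definition meeto (a b : option K) : option K :=
  match a, b with None, _ => b | _, None => a | Some x, Some y => Some (x `&` y) end.
Definition joino (a b : option K) : option K :=
  match a, b with Some x, Some y => Some (x `|` y) | _, _ => None end.
Lemma meeto_glb (a b c : option K) : le_inf c (meeto a b) = le_inf c a && le_inf c b.
Proof. by case: a b c => [x|] [y|] [z|] //=; rewrite ?lexI ?andbT. Qed.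
Lemma joino_lub (a b c : option K) : le_inf (joino a b) c = le_inf a c && le_inf b c.
Proof. by case: a b c => [x|] [y|] [z|] //=; rewrite ?leUx ?andbF. Qed.
Lemma le_inf_refl (a : option K) : le_inf a a.
Proof. by case: a => //= x. Qed.
Lemma le_inf_trans (a b c : option K) : le_inf a b -> le_inf b c -> le_inf a c.
Proof. by case: a b c => [x|] [y|] [z|] //=; apply: le_trans. Qed.
Lemma le_inf_anti (a b : option K) : le_inf a b -> le_inf b a -> a = b.
Proof. by case: a b => [x|] [y|] //= h1 h2; congr Some; apply/le_anti; rewrite h1 h2. Qed.
Lemma le_inf_bot (a : option K) : le_inf a (Some \bot) -> a = Some \bot.
Proof. by case: a => [x|] //= h; congr Some; apply/le_anti; rewrite h le0x. Qed.
End OptOps.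
Unset Implicit Arguments.

Section Beta.
Variables (I : Type) (dL : I -> Order.disp_t) (Li : forall i, bLatticeType (dL i))
  (d : Order.disp_t) (L : bLatticeType d) (e : forall i, Li i -> L).
Hypothesis Hco : is_zcoproduct e.

Definition Q := {t : forall k, option (Li k) | forall k, t k <> Some \bot}.
Definition leM (m n : option Q) : Prop :=
  match m, n with
  | None, _ => True
  | Some _, None => False
  | Some t, Some s => forall k, le_inf (proj1_sig t k) (proj1_sig s k)
  end.

Lemma joinQ_valid (t s : Q) k : joino (proj1_sig t k) (proj1_sig s k) <> Some \bot.
Proof.
case: t s => [t ht] [s hs] /=; move: (ht k) (hs k).
case: (t k) (s k) => [x|] [y|] //= hx _ [] hxy; apply: hx; congr Some.
by apply/le_anti; rewrite le0x -hxy leUl.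
Qed.
Definition joinQ (t s : Q) : Q := exist _ _ (joinQ_valid t s).
Definition joinM (m n : option Q) : option Q :=
  match m, n with
  | None, _ => n
  | _, None => m
  | Some t, Some s => Some (joinQ t s) end.
Definition meetM (m n : option Q) : option Q :=
  match m, n with
  | Some t, Some s =>
    match pselect (forall k, meeto (proj1_sig t k) (proj1_sig s k) <> Some \bot) with
    | left h => Some (exist _ (fun k => meeto (proj1_sig t k) (proj1_sig s k)) h)
    | right _ => None end
  | _, _ => None end.

Lemma M_ax : lat_ax leM meetM joinM None.
Proof.
split.
- by case=> [t|] //= k; apply: le_inf_refl.
- case=> [t|] [s|] //= h1 h2; congr Some; apply: sig_val_inj.
  by apply: functional_extensionality_dep => k; apply: le_inf_anti.
- case=> [t|] [s|] [u|] //= h1 h2 k; exact: le_inf_trans (h1 k) (h2 k).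
- case=> [t|] [u|] [v|] /=; try by intuition.
  case: pselect => [h|h] /=.
    split => [H|[H1 H2] k]; last by rewrite meeto_glb H1 H2.
    by split => k; have := H k; rewrite meeto_glb => /andP[].
  split => // -[H1 H2]; apply: h => k /esym hk.
  have := H1 k; have := H2 k; have := proj2_sig t k.
  move=> ht h2 h1; apply: ht; apply: le_inf_bot; rewrite hk meeto_glb h1 h2 //.
- case=> [t|] [u|] [v|] /=; try by intuition.
  by split => [H|[H1 H2] k]; [split => k; have := H k; rewrite joino_lub => /andP[]|
     rewrite joino_lub H1 H2].
- by [].
Qed.

Definition MM := clat M_ax.

Definition single (k : I) (b : Li k) (m : I) : option (Li m) :=
  match pselect (k = m) with
  | left h => Some (eq_rect k (fun j => Li j : Type) b m h)
  | right _ => None end.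

Lemma single_kk k b : single k b k = Some b.
Proof. by rewrite /single; case: pselect => [h|//]; rewrite (Prop_irrelevance h erefl). Qed.

Lemma single_valid k (b : Li k) : b <> \bot -> forall m, single k b m <> Some \bot.
Proof. by move=> hb m; rewrite /single; case: pselect => [h|//]; subst => -[]. Qed.

Lemma single_meet k (a c : Li k) m :
  single k (a `&` c) m = meeto (single k a m) (single k c m).
Proof. by rewrite /single; case: pselect => [h|//]; subst. Qed.
Lemma single_join k (a c : Li k) m :
  single k (a `|` c) m = joino (single k a m) (single k c m).
Proof. by rewrite /single; case: pselect => [h|//]; subst. Qed.

Definition fM (k : I) (b : Li k) : MM :=
  match pselect (b = \bot) with
  | left _ => None
  | right h => Some (exist _ (single k b) (single_valid _ _ h)) end.
Arguments fM {k}.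

Lemma fM0 k : fM (\bot : Li k) = None.
Proof. by rewrite /fM; case: pselect. Qed.
Lemma fMS k (b : Li k) (h : b <> \bot) : fM b = Some (exist _ (single k b) (single_valid _ _ h)).
Proof.
rewrite /fM; case: pselect => [//|h']; congr Some; exact: sig_val_inj.
Qed.

Arguments fMS {k b}.

Lemma fM_hom k : zlat_hom (@fM k).
Proof.
split; first exact: fM0.
- move=> a c; rewrite cmeetE.
  have [->|ha] := pselect (a = \bot); first by rewrite meet0x fM0.
  have [->|hc] := pselect (c = \bot); first by rewrite meetx0 fM0; case: (fM a).
  rewrite (fMS ha) (fMS hc) /=; case: pselect => [h|h].
    have [hac|hac] := pselect (a `&` c = \bot).
      by exfalso; apply: (h k); rewrite !single_kk /= hac.
    rewrite (fMS hac); congr Some; apply: sig_val_inj => /=.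
    by apply: functional_extensionality_dep => m; rewrite single_meet.
  have [hac|hac] := pselect (a `&` c = \bot); first by rewrite hac fM0.
  by exfalso; apply: h => m; rewrite -single_meet; apply: single_valid.
- move=> a c; rewrite cjoinE.
  have [->|ha] := pselect (a = \bot); first by rewrite join0x fM0.
  have [->|hc] := pselect (c = \bot); first by rewrite joinx0 fM0; case: (fM a).
  have hac : a `|` c <> \bot.
    by move=> h; apply: ha; apply/le_anti; rewrite le0x -h leUl.
  rewrite (fMS ha) (fMS hc) (fMS hac) /=; congr Some; apply: sig_val_inj => /=.
  by apply: functional_extensionality_dep => m; rewrite single_join.
Qed.

Definition compM (k : I) (m : option Q) : option (Li k) :=
  match m with None => Some \bot | Some t => proj1_sig t k end.

Lemma ex_beta : exists g : L -> MM,
  [/\ zlat_hom g, forall k b, g (e k b) = fM b &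
    forall x k a, compM k (g x) = Some a -> x <= e k a].
Proof.
have [g [hg ge _]] := (proj2 Hco) _ MM (@fM) fM_hom.
have hej j : zlat_hom (e j) by apply: (proj1 Hco).
have emono j := @hom_le _ _ _ _ _ (hej j).
have e0 j : e j \bot = \bot by case: (hej j).
have eI j a c : e j (a `&` c) = e j a `&` e j c by case: (hej j).
case: (hg) => g0 gI gU.
exists g; split => //.
apply: (@gen_closure _ _ _ _ _ e Hco (fun x => forall k a, compM k (g x) = Some a -> x <= e k a)).
- by move=> k a; rewrite le0x.
- move=> x y hx hy k a; rewrite gI cmeetE.
  case Egx: (g x) => [t|]; last first.
    by move=> [<-]; apply: le_trans (leIl _ _) _; apply: hx; rewrite Egx.
  case Egy: (g y) => [s|]; last first.
    by rewrite /meetM; case: (g x) => [?|] [<-]; apply: le_trans (leIr _ _) _; apply: hy; rewrite Egy.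
  rewrite /meetM; case: pselect => [h|h] /=.
    move: (hx k) (hy k); rewrite Egx Egy /=.
    case: (proj1_sig t k) (proj1_sig s k) => [a1|] [a2|] //= h1 h2 [<-].
    + by rewrite eI; apply: leI2; [apply: h1|apply: h2].
    + by apply: le_trans (leIl _ _) (h1 _ _).
    + by apply: le_trans (leIr _ _) (h2 _ _).
  move=> [<-]; rewrite e0; apply/negPn/negP => hne; apply: h => m hm.
  move: (hx m) (hy m) (proj2_sig t m) (proj2_sig s m) hm; rewrite Egx Egy /=.
  case: (proj1_sig t m) (proj1_sig s m) => [a1|] [a2|] //= h1 h2 ht hs [hb].
  by apply: (negP hne); rewrite -(e0 m) -hb eI; apply: leI2; [apply: h1|apply: h2].
- move=> x y hx hy k a; rewrite gU cjoinE.
  case Egx: (g x) => [t|] /=.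
    case Egy: (g y) => [s|] /=.
      move: (hx k) (hy k); rewrite Egx Egy /=.
      case: (proj1_sig t k) (proj1_sig s k) => [a1|] [a2|] //= h1 h2 [<-].
      by rewrite leUx; apply/andP; split; apply: le_trans (emono _ _ _ _);
        [apply: h1|apply: leUl|apply: h2|apply: leUr].
    move=> hk; rewrite leUx; apply/andP; split; first by apply: hx; rewrite Egx.
    have := hy k; rewrite Egy /= => /(_ _ erefl) hy0; apply: le_trans hy0 _.
    by apply: emono; apply: le0x.
  move=> hk; rewrite leUx; apply/andP; split; last by apply: hy.
  have := hx k; rewrite Egx /= => /(_ _ erefl) hx0; apply: le_trans hx0 _.
  by apply: emono; apply: le0x.
- move=> j b k a; rewrite ge.
  have [->|hb] := pselect (b = \bot).
    by rewrite fM0 /= => _; rewrite e0 le0x.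
  rewrite (fMS hb) /= /single; case: pselect => [h|//]; subst => /= -[<-].
  exact: le_refl.
Qed.
End Beta.


Section Generic.
Variables (d1 d2 : Order.disp_t) (K : bLatticeType d1) (L : bLatticeType d2) (e : K -> L).

Lemma beta_lb (beta : L -> option K) : is_beta e beta -> lower_bounded e.
Proof.
move=> hb y; have [h1 h2] := hb y.
case E: (beta y) h1 => [a|] /= h1.
  right; exists a; split => // x hx.
  by have := h2 (Some x); rewrite E /=; move/(_ hx).
left => x; apply/negP => hx.
by have := h2 (Some x); rewrite E /=; move/(_ hx).
Qed.

Lemma alpha_ub (alpha : L -> K) : is_alpha e alpha -> upper_bounded e.
Proof. by move=> ha y; right; exists (alpha y); have [h1 h2] := ha y; split. Qed.

Lemma ne_complete : zlat_hom e -> lower_bounded e -> upper_bounded e ->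
  nonempty_complete <=%O <=%O e.
Proof.
move=> he hl hu; have emono := @hom_le _ _ _ _ _ he; split.
- move=> X a [x0 Xx0] [ha1 ha2]; split.
    by move=> y [x Xx ->]; apply: emono; apply: ha1.
  move=> z hz; case: (hl z) => [hn|[x1 [hz1 hmin]]].
    by have := hn x0; rewrite hz //; exists x0.
  apply: le_trans hz1 _; apply: emono; apply: ha2 => x Xx.
  by apply: hmin; apply: hz; exists x.
- move=> X a [x0 Xx0] [ha1 ha2]; split.
    by move=> y [x Xx ->]; apply: emono; apply: ha1.
  move=> z hz; case: (hu z) => [hn|[x1 [hz1 hmax]]].
    by have := hn x0; rewrite hz //; exists x0.
  apply: le_trans _ hz1; apply: emono; apply: ha2 => x Xx.
  by apply: hmax; apply: hz; exists x.
Qed.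

Lemma alpha_mc (alpha : L -> K) : zlat_hom e -> is_alpha e alpha ->
  meet_complete <=%O <=%O alpha.
Proof.
move=> he ha; have emono := @hom_le _ _ _ _ _ he.
have amono x y : x <= y -> alpha x <= alpha y.
  by move=> hxy; apply: (proj2 (ha y)); apply: le_trans (proj1 (ha x)) hxy.
move=> X a [ha1 ha2]; split.
  by move=> y [x Xx ->]; apply: amono; apply: ha1.
move=> c hc; apply: (proj2 (ha a)); apply: ha2 => x Xx.
apply: le_trans (proj1 (ha x)); apply: emono; apply: hc; by exists x.
Qed.

Lemma beta_jc (beta : L -> option K) : zlat_hom e -> is_beta e beta ->
  nonempty_join_complete <=%O (@le_inf _ K) beta.
Proof.
move=> he hb; have emono := @hom_le _ _ _ _ _ he.
have bmono x y : x <= y -> le_inf (beta x) (beta y).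
  move=> hxy; apply: (proj2 (hb x)); have := proj1 (hb y).
  by case: (beta y) => [b|] //= h; apply: le_trans hxy h.
move=> X a _ [ha1 ha2]; split.
  by move=> y [x Xx ->]; apply: bmono; apply: ha1.
case=> [c|] hc; last by case: (beta a).
apply: (proj2 (hb a)) => /=; apply: ha2 => x Xx.
have := hc (beta x) (ex_intro2 _ _ x Xx erefl); have := proj1 (hb x).
by case: (beta x) => [b|] //= h1 h2; apply: le_trans h1 (emono _ _ h2).
Qed.
End Generic.


Theorem corollary4p3 (I : Type) (dL : I -> Order.disp_t)
  (Li : forall i, bLatticeType (dL i)) (d : Order.disp_t) (L : bLatticeType d)
  (e : forall i, Li i -> L) :
  @is_zcoproduct I dL Li d L e ->
  forall i : I,
  [/\ lower_bounded (e i), upper_bounded (e i),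
      nonempty_complete <=%O <=%O (e i),
      (exists alpha, is_alpha (e i) alpha) /\
        (forall alpha, is_alpha (e i) alpha -> meet_complete <=%O <=%O alpha) &
      (exists beta, is_beta (e i) beta) /\
        (forall beta, is_beta (e i) beta ->
           nonempty_join_complete <=%O (@le_inf _ (Li i)) beta)].
Proof.
move=> Hco i.
have hei : zlat_hom (e i) by apply: (proj1 Hco).
have [r [hr rei ealpha]] := @ex_alpha _ _ _ _ _ e Hco i.
have ha : is_alpha (e i) r.
  move=> x; split => // a hax; rewrite -(rei a); exact: (@hom_le _ _ _ _ _ hr).
have [g [hg ge gP]] := @ex_beta _ _ _ _ _ e Hco.
pose beta x := compM I dL Li i (g x).
have hb : is_beta (e i) beta.
  move=> x; split.
    rewrite /beta; case E: (compM _ _ _ _ _) => [a|] //=; exact: gP E.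
  case=> [c|] //= hxc.
  have := @hom_le _ _ _ _ _ hg _ _ hxc; rewrite ge cleE => /asboolP.
  rewrite /beta; have [->|hc] := pselect (c = \bot).
    by rewrite fM0; case: (g x) => //= _; apply: le_refl.
  rewrite (fMS _ _ _ _ _ hc); case: (g x) => [t|] /=; last by move=> _; apply: le0x.
  by move=> /(_ i); rewrite single_kk.
have hub := alpha_ub _ _ _ _ _ _ ha; have hlb := beta_lb _ _ _ _ _ _ hb.
split => //.
- exact: ne_complete.
- by split; [exists r|move=> alpha; apply: alpha_mc].
- by split; [exists beta|move=> beta'; apply: beta_jc].
Qed.
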